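(* Let $k\geq 2$ and let $G$ be a bipartite graph of order $n\geq 11k-4$ that does not contain $k\cdot P_3$ as a subgraph. Then $e(G)\leq (k-1)(n-k+1)$. Moreover, if $k=2$, equality holds if and only if $G=T_{n,s}$ for some $s\in\{0,1,\dots,\lfloor (n-1)/2\rfloor\}$; if $k\geq 3$, equality holds if and only if $G=K_{k-1,n-k+1}$.
   Context: Graphs are finite and simple; $e(G)$ is the number of edges. $P_3$ is the path on 3 vertices and $k\cdot P_3$ is the disjoint union of $k$ copies of $P_3$. $K_{a,b}$ is the complete bipartite graph with parts of sizes $a$ and $b$. For $0\leq s\leq \lfloor (n-1)/2\rfloor$, $T_{n,s}$ is the tree of order $n$ obtained by taking $s$ paths $P_3$ and $n-2s-1$ paths $P_2$ and identifying an end vertex of each of these paths into a single common vertex (so $T_{n,0}$ is the star of order $n$). *)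

(* Defs.v *)
From mathcomp Require Import all_boot.
Set Implicit Arguments. Unset Strict Implicit. Unset Printing Implicit Defensive.

Definition simple_graph (T : finType) (e : rel T) : Prop :=
  symmetric e /\ irreflexive e.

Definition edge_set (T : finType) (e : rel T) : {set {set T}} :=
  [set A : {set T} | [exists x, exists y, (A == [set x; y]) && e x y]].

Definition num_edges (T : finType) (e : rel T) : nat := #|edge_set e|.

Definition bipartite (T : finType) (e : rel T) : Prop :=
  exists A : {set T}, forall x y, e x y -> (x \in A) != (y \in A).

(* G contains k.P3 as a subgraph: an injective map of the vertices of k
   disjoint copies of P3 (vertex (i,j) is the j-th vertex of the i-th path,
   path edges (i,0)-(i,1) and (i,1)-(i,2)) sending edges to edges. *)
Definition contains_kP3 (T : finType) (e : rel T) (k : nat) : Prop :=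
  exists f : 'I_k * 'I_3 -> T,
    injective f /\
    forall i : 'I_k,
      e (f (i, inord 0)) (f (i, inord 1)) /\ e (f (i, inord 1)) (f (i, inord 2)).

Definition graph_iso (T T' : finType) (e : rel T) (e' : rel T') : Prop :=
  exists f : T -> T', bijective f /\ forall x y, e x y = e' (f x) (f y).

Definition Kab_rel (a b : nat) : rel 'I_(a + b) :=
  fun x y => (x < a) != (y < a).

(* T_{n,s} on vertex set 'I_n: vertex 0 is the common vertex;
   vertices 1..s are the middle vertices of the s paths P3, vertex i+s
   (1 <= i <= s) is the far end of the path through i; vertices
   2s+1..n-1 are the far ends of the n-2s-1 paths P2. *)
Definition tns_adj (s x y : nat) : bool :=
  ((x == 0) && (0 < y <= s))
  || ((x == 0) && (2 * s < y))
  || ((0 < x <= s) && (y == x + s)).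

Definition Tns_rel (n s : nat) : rel 'I_n :=
  fun x y => tns_adj s x y || tns_adj s y x.
Arguments Tns_rel : clear implicits.
Arguments Kab_rel : clear implicits.

(* Main.v *)
Require Import Defs.
From mathcomp Require Import all_boot zify.
From Stdlib Require Import Classical.
Set Implicit Arguments. Unset Strict Implicit. Unset Printing Implicit Defensive.

Section G.
Variable T : finType.
Variable e : rel T.
Variable A : {set T}.
Hypothesis esym : symmetric e.
Hypothesis hA : forall x y, e x y -> (x \in A) != (y \in A).

Lemma eirr x : e x x = false.
Proof. by apply/negP => /hA; rewrite eqxx. Qed.

Definition deg (V : {set T}) x := \sum_(y in V) (e x y : nat).
Definition DD (V : {set T}) := \sum_(x in V) deg V x.

Lemma degE V x : deg V x = #|[set y in V | e x y]|.
Proof.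
rewrite /deg -sum1_card.
rewrite [RHS](eq_bigl (fun y => (y \in V) && e x y)); last by move=> y; rewrite !inE.
rewrite big_mkcondr /=; apply: eq_bigr => y _.
by case: (e x y).
Qed.

Lemma deg_le V x : deg V x <= #|V|.
Proof. rewrite degE; apply: subset_leq_card; apply/subsetP => y; rewrite inE; by case/andP. Qed.

Lemma sum_le_eq (I : finType) (B : {set I}) (f g : I -> nat) :
  (forall i, i \in B -> f i <= g i) ->
  \sum_(i in B) g i <= \sum_(i in B) f i -> forall i, i \in B -> f i = g i.
Proof.
move=> fg hs i iB; apply/eqP; rewrite eqn_leq fg //=.
rewrite leqNgt; apply/negP => lt.
move: hs; rewrite (bigD1 i) //= [X in _ <= X](bigD1 i) //=.
have : \sum_(j in B | j != i) f j <= \sum_(j in B | j != i) g j.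
  by apply: leq_sum => j /andP [jB _]; apply: fg.
lia.
Qed.

Lemma DD_split (V : {set T}) v : v \in V -> DD V = DD (V :\ v) + 2 * deg V v.
Proof.
move=> vV; rewrite /DD (bigD1 v) //=.
have -> : \sum_(x in V | x != v) deg V x = \sum_(x in V :\ v) deg V x.
  by apply: eq_bigl => x; rewrite !inE andbC.
have h x : x \in V :\ v -> deg V x = deg (V :\ v) x + (e x v : nat).
  move=> _; rewrite /deg (bigD1 v) //= addnC; congr (_ + _).
  by apply: eq_bigl => y; rewrite !inE andbC.
rewrite (eq_bigr _ h) big_split /=.
have -> : \sum_(i in V :\ v) (e i v : nat) = deg V v.
  rewrite /deg [in RHS](bigD1 v) //= eirr add0n.
  by apply: eq_big => y; [rewrite !inE andbC | move=> _; rewrite esym].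
lia.
Qed.


Lemma sum_sub (I : finType) (B C : {set I}) (F : I -> nat) :
  B \subset C -> \sum_(i in B) F i <= \sum_(i in C) F i.
Proof.
move=> BC; rewrite [X in _ <= X](big_setID B) /=.
by rewrite (setIidPr BC) leq_addr.
Qed.

Definition packing (V : {set T}) t (f : nat -> nat -> T) :=
 [/\ forall i j, i < t -> j < 3 -> f i j \in V,
     forall i j i' j', i < t -> j < 3 -> i' < t -> j' < 3 -> f i j = f i' j' -> i = i' /\ j = j' &
     forall i, i < t -> e (f i 0) (f i 1) /\ e (f i 1) (f i 2)].
Definition has_pack V t := exists f, packing V t f.

Lemma pack0 V (x0 : T) : has_pack V 0.
Proof. by exists (fun _ _ => x0); split. Qed.

Lemma pack_contains k : has_pack setT k -> contains_kP3 e k.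
Proof.
case=> f [_ hi he]; exists (fun p : 'I_k * 'I_3 => f p.1 p.2); split.
  move=> [i j] [i' j'] /= /hi [] //= hii hjj.
  by congr pair; apply: val_inj.
move=> i /=; rewrite !inordK //; exact: he.
Qed.

Lemma max_pack (P : nat -> Prop) k : P 0 -> ~ P k -> exists t, [/\ t < k, P t & ~ P t.+1].
Proof.
move=> P0; elim: k => [//|k IH] nPk.
case: (classic (P k)) => Pk; first by exists k.
by case: (IH Pk) => t [tk Pt nPt]; exists t; split => //; apply: ltnW.
Qed.

Definition Sset t (f : nat -> nat -> T) : {set T} :=
  [set f (val p.1) (val p.2) | p in [set: 'I_t * 'I_3]].

Lemma memS t f x : reflect (exists i j, [/\ i < t, j < 3 & x = f i j]) (x \in Sset t f).
Proof.
apply: (iffP imsetP) => [[[i j] _ ->]|[i [j [it jt ->]]]].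
  by exists i, j; split.
by exists (Ordinal it, Ordinal jt).
Qed.

Lemma cardS V t f : packing V t f -> #|Sset t f| = 3 * t.
Proof.
move=> [_ hi _]; rewrite card_imset ?cardsT ?card_prod ?card_ord 1?mulnC //.
move=> [i j] [i' j'] /= /hi [] // hii hjj.
by congr pair; apply: val_inj.
Qed.

Lemma S_sub V t f : packing V t f -> Sset t f \subset V.
Proof. by move=> [hV _ _]; apply/subsetP => x /memS [i [j [it jt ->]]]; apply: hV. Qed.

End G.

Lemma lt3 j : j < 3 -> [\/ j = 0, j = 1 | j = 2].
Proof. by case: j => [|[|[|j]]] // _; [apply: Or31|apply: Or32|apply: Or33]. Qed.

Lemma pack_ext (T : finType) (e : rel T) V t f a b c : packing e V t f ->
  a \in V -> b \in V -> c \in V -> a != b -> b != c -> a != c ->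
  (forall i j, i < t -> j < 3 -> [&& f i j != a, f i j != b & f i j != c]) ->
  e a b -> e b c -> has_pack e V t.+1.
Proof.
move=> [hV hi he] aV bV cV ab bc ac hn eab ebc.
pose g i j := if i == t then (if j == 0 then a else if j == 1 then b else c) else f i j.
have gt j : j < 3 -> g t j = a /\ j = 0 \/ g t j = b /\ j = 1 \/ g t j = c /\ j = 2.
  by rewrite /g eqxx; case/lt3 => ->; auto.
have gi i j : i < t -> g i j = f i j by move=> it; rewrite /g (ltn_eqF it).
exists g; split.
- move=> i j; rewrite ltnS leq_eqVlt; case/orP => [/eqP -> /gt|it jt]; last by rewrite gi // hV.
  by case=> [[-> _]|[[-> _]|[-> _]]].
- move=> i j i' j'; rewrite !ltnS [i <= t]leq_eqVlt [i' <= t]leq_eqVlt.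
  case/orP => [/eqP -> /gt hj|it jt]; case/orP => [/eqP -> /gt hj'|it' jt'].
  + case: hj => [[-> ->]|[[-> ->]|[-> ->]]]; case: hj' => [[-> ->]|[[-> ->]|[-> ->]]] // h;
      by [split | move: ab bc ac; rewrite h eqxx].
  + rewrite (gi i') // => h; have := hn _ _ it' jt'; rewrite -h.
    by case: hj => [[-> _]|[[-> _]|[-> _]]]; rewrite eqxx ?andbF.
  + rewrite (gi i) // => h; have := hn _ _ it jt; rewrite h.
    by case: hj' => [[-> _]|[[-> _]|[-> _]]]; rewrite eqxx ?andbF.
  + by rewrite !gi //; apply: hi.
- move=> i; rewrite ltnS leq_eqVlt; case/orP => [/eqP -> |it]; last by rewrite !gi //; apply: he.
  by rewrite /g eqxx.
Qed.

Section G3.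
Variable T : finType.
Variable e : rel T.
Variable A : {set T}.
Hypothesis esym : symmetric e.
Hypothesis hA : forall x y, e x y -> (x \in A) != (y \in A).

Lemma pack_sub (V V' : {set T}) t f : packing e V' t f -> V' \subset V -> packing e V t f.
Proof. by move=> [hV hi he] /subsetP sub; split => // i j it jt; apply: sub; apply: hV. Qed.

Lemma tri_false x y z : e x y -> e y z -> e x z -> False.
Proof.
move=> /hA h1 /hA h2 /hA h3; move: h1 h2 h3.
by case: (x \in A); case: (y \in A); case: (z \in A).
Qed.

Lemma hi_ext (V : {set T}) v k : v \in V -> 2 * k <= deg e V v -> 0 < k ->
  has_pack e (V :\ v) k.-1 -> has_pack e V k.
Proof.
move=> vV hd k0 [f pf]; set t := k.-1.
have [hV hi he] := pf.
set S := Sset t f; set N := [set y in V | e v y].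
have hN : #|N| = deg e V v by rewrite degE.
set P := [set p : 'I_t * 'I_3 | e v (f p.1 p.2)].
have NS : N :&: S \subset [set f (val p.1) (val p.2) | p in P].
  apply/subsetP => x; rewrite !inE => /andP [/andP [xV evx] /memS [i [j [it jt xe]]]].
  by apply/imsetP; exists (Ordinal it, Ordinal jt) => //; rewrite inE /= -xe.
have cP : #|P| <= 2 * t.
  have := @leq_card_in _ _ (fun p : 'I_t * 'I_3 => (p.1, val p.2 == 2)) P.
  rewrite card_prod card_ord card_bool mulnC; apply.
  move=> [i j] [i' j']; rewrite !inE /= => e1 e2 [ii' jj']; subst i'.
  congr pair; apply: ord_inj; move: e1 e2 jj'.
  have [i0 i1] := he i (ltn_ord i).
  move=> e1 e2 jj'.
  case: (lt3 (ltn_ord j)) => hj; case: (lt3 (ltn_ord j')) => hj';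
    rewrite hj hj' in e1 e2 jj' *; try done;
    by exfalso; apply: (@tri_false (f i 0) (f i 1) v i0); rewrite esym.
have cNS : 2 <= #|N :\: S|.
  have h1 : #|N :&: S| <= 2 * t := leq_trans (subset_leq_card NS) (leq_trans (leq_imset_card _ _) cP).
  have := cardsID S N.
  have tk : t.+1 = k := prednK k0.
  lia.
case/card_gt1P: cNS => a [c [aN cN ac]].
move: aN cN; rewrite !inE => /andP [aS /andP [aV eva]] /andP [cS /andP [cV evc]].
rewrite -(prednK k0).
apply: (pack_ext (pack_sub pf (subsetDl V [set v])) aV vV cV) => //.
- by apply/negP => /eqP av; move: eva; rewrite av (eirr hA).
- by apply/negP => /eqP cv; move: evc; rewrite cv (eirr hA).
- move=> i j it jt; have := hV i j it jt; rewrite !inE => /andP [fv _].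
  rewrite fv /=; apply/andP; split; apply/negP => /eqP h.
    by move: aS; rewrite -h; case/negP; apply/memS; exists i, j.
  by move: cS; rewrite -h; case/negP; apply/memS; exists i, j.
- by rewrite esym.
Qed.

End G3.

Section G4.
Variable T : finType.
Variable e : rel T.
Variable A : {set T}.
Hypothesis esym : symmetric e.
Hypothesis hA : forall x y, e x y -> (x \in A) != (y \in A).

Lemma lowdeg (V : {set T}) k : 2 <= k -> 11 * k - 4 <= #|V| -> ~ has_pack e V k ->
  (forall x, x \in V -> deg e V x <= 2 * k - 1) -> DD e V < 2 * (k - 1) * (#|V| - k + 1).
Proof.
move=> k2 hn np hd.
have [x0 _] : exists x0, x0 \in V by apply/card_gt0P; lia.
case: (max_pack (pack0 e V x0) np) => t [tk [f pf] npt].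
have [hV hi he] := pf.
set S := Sset t f; have SV := S_sub pf; have cS := cardS pf.
set R := V :\: S.
have hR x : x \in R -> \sum_(y in R) (e x y : nat) <= 1.
  move=> xR; rewrite -/(deg e R x) degE leqNgt; apply/negP => /card_gt1P [y1 [y2 [y1R y2R y12]]].
  apply: npt; move: xR y1R y2R; rewrite !inE => /andP [xS xV] /andP [/andP [y1S y1V] ey1] /andP [/andP [y2S y2V] ey2].
  apply: (pack_ext pf y1V xV y2V) => //.
  - by apply/negP => /eqP h; move: ey1; rewrite h (eirr hA).
  - by apply/negP => /eqP h; move: ey2; rewrite h (eirr hA).
  - move=> i j it jt; have fS : f i j \in S by apply/memS; exists i, j.
    by apply/and3P; split; apply/negP => /eqP h; [move: y1S|move: xS|move: y2S]; rewrite -h fS.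
  - by rewrite esym.
have cR : #|R| = #|V| - 3 * t by rewrite cardsDS // cS.
have E1 : DD e V = \sum_(x in S) deg e V x + \sum_(x in R) deg e V x.
  by rewrite /DD (big_setID S) (setIidPr SV).
have B1 : \sum_(x in S) deg e V x <= 3 * t * (2 * k - 1).
  rewrite -cS -sum_nat_const; apply: leq_sum => x xS; apply: hd; exact: (subsetP SV).
have B2 : \sum_(x in R) deg e V x <= \sum_(x in R) (\sum_(y in S) (e x y : nat)) + #|R|.
  rewrite -sum1_card -big_split; apply: leq_sum => x xR.
  by rewrite /deg (big_setID S) (setIidPr SV) leq_add2l hR.
have B3 : \sum_(x in R) \sum_(y in S) (e x y : nat) <= \sum_(y in S) deg e V y.
  apply: leq_trans (sum_sub _ (subsetDl V S)) _.
  rewrite exchange_big; apply: leq_sum => y _; rewrite /deg; apply: eq_leq.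
  by apply: eq_bigr => x _; rewrite esym.
have tk1 : t <= k - 1 by lia.
set M := 3 * t * (2 * k - 1) in B1.
have hD : DD e V <= 6 * t * (2 * k - 1) + (#|V| - 3 * t).
  have -> : 6 * t * (2 * k - 1) = M + M by rewrite /M; lia.
  rewrite E1 -cR -addnA; apply: (leq_add B1).
  apply: leq_trans B2 _; rewrite leq_add2r; exact: leq_trans B3 B1.
 apply: (leq_ltn_trans hD).
have h3 : 6 * t * (2 * k - 1) <= 6 * (k - 1) * (2 * k - 1) := leq_mul (leq_mul (leqnn 6) tk1) (leqnn _).
nia.
Qed.

End G4.

Section G5.
Variable T : finType.
Variable e : rel T.
Variable A : {set T}.
Hypothesis esym : symmetric e.
Hypothesis hA : forall x y, e x y -> (x \in A) != (y \in A).

Lemma inS (B : {set T}) (P : pred T) y : (y \in [set z in B | P z]) = (y \in B) && P y.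
Proof. by rewrite inE. Qed.

Lemma star_bound (V N U : {set T}) v : v \in V -> ~ has_pack e (V :\ v) 1 ->
  N = [set y in V | e v y] -> U = (V :\ v) :\: N ->
  [/\ DD e V <= 2 * #|N| + #|U| + \sum_(u in U) \sum_(x in N) (e u x : nat),
      (forall u, u \in U -> \sum_(x in N) (e u x : nat) <= 1),
      (forall x, x \in V :\ v -> deg e (V :\ v) x <= 1) &
      #|N| + #|U| = #|V| - 1].
Proof.
move=> vV np hN hU; set V' := V :\ v.
have h1 x : x \in V' -> deg e V' x <= 1.
  move=> xV; rewrite degE leqNgt; apply/negP => /card_gt1P [y1 [y2 [y1V y2V y12]]].
  apply: np; move: y1V y2V; rewrite !inS => /andP [y1V ey1] /andP [y2V ey2].
  have p0 : packing e V' 0 (fun _ _ => x) by split.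
  apply: (pack_ext p0 y1V xV y2V) => //.
  - by apply/negP => /eqP h; move: ey1; rewrite h (eirr hA).
  - by apply/negP => /eqP h; move: ey2; rewrite h (eirr hA).
  - by rewrite esym.
have NV : N \subset V'.
  apply/subsetP => y; rewrite hN !inE => /andP [yV evy]; rewrite yV andbT.
  by apply/negP => /eqP h; move: evy; rewrite h (eirr hA).
have h2 x : x \in N -> deg e V' x = \sum_(y in U) (e x y : nat).
  move=> xN; rewrite /deg (big_setID N) (setIidPr NV) hU big1 ?add0n // => y yN.
  apply/eqP; rewrite eqb0; apply/negP => exy.
  move: xN yN; rewrite hN !inE => /andP [_ evx] /andP [_ evy].
  exact: (tri_false hA evx exy evy).
have UV : U \subset V' by rewrite hU subsetDl.
have dv : deg e V v = #|N| by rewrite degE hN.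
have E : DD e V = DD e V' + 2 * #|N| by rewrite (DD_split esym hA vV) dv.
have E2 : DD e V' = \sum_(x in N) deg e V' x + \sum_(x in U) deg e V' x.
  by rewrite /DD (big_setID N) (setIidPr NV) hU.
have E3 : \sum_(x in N) deg e V' x = \sum_(u in U) \sum_(x in N) (e u x : nat).
  rewrite (eq_bigr _ h2) exchange_big; apply: eq_bigr => u _; apply: eq_bigr => x _.
  by rewrite esym.
have B : \sum_(x in U) deg e V' x <= #|U|.
  rewrite -sum1_card; apply: leq_sum => x xU; apply: h1; exact: (subsetP UV).
have cV : #|V'| = #|V| - 1 by rewrite [in RHS](cardsD1 v V) vV add1n subn1.
split => //.
- rewrite E E2 E3; lia.
- move=> u uU; apply: leq_trans (h1 u (subsetP UV u uU)); exact: sum_sub NV.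
- by rewrite -cV -(cardsID N V') (setIidPr NV) hU.
Qed.

Lemma star_le (V : {set T}) v : v \in V -> ~ has_pack e (V :\ v) 1 -> DD e V <= 2 * (#|V| - 1).
Proof.
move=> vV np.
have [h1 h2 _ h4] := star_bound vV np (erefl _) (erefl _).
set N := [set y in V | e v y] in h1 h2 h4 *.
set U := V :\ v :\: N in h1 h2 h4 *.
have : \sum_(u in U) \sum_(x in N) (e u x : nat) <= #|U|.
  by rewrite -sum1_card; apply: leq_sum.
lia.
Qed.

Definition cross (X : {set T}) x y := (x \in X) != (y \in X).

Lemma cross_sum (V X : {set T}) :
  \sum_(x in V) \sum_(y in V) (cross X x y : nat) = 2 * (#|V :&: X| * #|V :\: X|).
Proof.
have h x : \sum_(y in V) (cross X x y : nat) = if x \in X then #|V :\: X| else #|V :&: X|.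
  rewrite (big_setID X) /=.
  have h1 : \sum_(y in V :&: X) (cross X x y : nat) = \sum_(y in V :&: X) (x \notin X : nat).
    by apply: eq_bigr => y /setIP [_ yX]; rewrite /cross yX; case: (x \in X).
  have h2 : \sum_(y in V :\: X) (cross X x y : nat) = \sum_(y in V :\: X) (x \in X : nat).
    by apply: eq_bigr => y /setDP [_ /negbTE yX]; rewrite /cross yX; case: (x \in X).
  by rewrite h1 h2 !sum_nat_const; case: (x \in X); rewrite ?muln0 ?muln1 ?addn0.
rewrite (eq_bigr _ (fun x _ => h x)) (big_setID X) /=.
have h1 : \sum_(x in V :&: X) (if x \in X then #|V :\: X| else #|V :&: X|) = \sum_(x in V :&: X) #|V :\: X|.
  by apply: eq_bigr => x /setIP [_ ->].
have h2 : \sum_(x in V :\: X) (if x \in X then #|V :\: X| else #|V :&: X|) = \sum_(x in V :\: X) #|V :&: X|.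
  by apply: eq_bigr => x /setDP [_ /negbTE ->].
rewrite h1 h2 !sum_nat_const; lia.
Qed.

Lemma side_bound (V X : {set T}) : (forall x y, e x y -> cross X x y) ->
  DD e V <= 2 * (#|V :&: X| * #|V :\: X|).
Proof.
move=> hX; rewrite -cross_sum; apply: leq_sum => x _; apply: leq_sum => y _.
by case exy: (e x y) => //; rewrite hX.
Qed.

End G5.

Section G6.
Variable T : finType.
Variable e : rel T.
Variable A : {set T}.
Hypothesis esym : symmetric e.
Hypothesis hA : forall x y, e x y -> (x \in A) != (y \in A).

Lemma deg_cases (V : {set T}) k :
  (forall x, x \in V -> deg e V x <= 2 * k - 1) \/ exists2 v, v \in V & 2 * k <= deg e V v.
Proof.
case: (boolP [exists x in V, 2 * k <= deg e V x]).
  by case/existsP => v /andP [vV hv]; right; exists v.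
rewrite negb_exists => /forallP H; left => x xV.
by move: (H x); rewrite xV /= -ltnNge; lia.
Qed.

Definition sideX v := if v \in A then A else ~: A.

Lemma sideX_cross v x y : e x y -> cross (sideX v) x y.
Proof.
move/hA; rewrite /cross /sideX; case: (v \in A) => //.
by rewrite !inE; case: (x \in A); case: (y \in A).
Qed.

Lemma sideX_v v : v \in sideX v.
Proof. by rewrite /sideX; case: ifP => // /negbT; rewrite inE. Qed.

Lemma deg_side (V : {set T}) v : deg e V v <= #|V :\: sideX v|.
Proof.
rewrite degE; apply: subset_leq_card; apply/subsetP => y; rewrite inS => /andP [yV evy].
rewrite inE yV andbT; have := sideX_cross v evy; rewrite /cross sideX_v.
by case: (y \in sideX v).
Qed.

Lemma Qk j : forall V : {set T}, 11 * j.+2 - 4 <= #|V| -> ~ has_pack e V j.+2 ->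
  DD e V <= 2 * (j.+2 - 1) * (#|V| - j.+2 + 1).
Proof.
elim: j => [|j IH] V hn np.
  case: (deg_cases V 2) => [hd|[v vV hv]].
    by apply: ltnW; apply: (lowdeg esym hA).
  have np' : ~ has_pack e (V :\ v) 1 := fun h => np (hi_ext esym hA vV hv (isT : 0 < 2) h).
  have := star_le esym hA vV np'; lia.
case: (deg_cases V j.+3) => [hd|[v vV hv]].
  by apply: ltnW; apply: (lowdeg esym hA).
have np' : ~ has_pack e (V :\ v) j.+2 := fun h => np (hi_ext esym hA vV hv (isT : 0 < j.+3) h).
have cV : #|V :\ v| = #|V| - 1 by rewrite [in RHS](cardsD1 v V) vV add1n subn1.
have E := DD_split esym hA vV.
case: (leqP (deg e V v) (#|V| - j.+3 + 1)) => hd.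
  have := IH (V :\ v); rewrite cV => /(_ _ np') h.
  have {h} h : DD e (V :\ v) <= 2 * j.+1 * (#|V| - j.+3 + 1) by apply: leq_trans (h _) _; lia.
  rewrite E; nia.
have hs := side_bound V (@sideX_cross v).
have hb := deg_side V v.
have := cardsID (sideX v) V.
set a := #|V :&: sideX v|; set b := #|V :\: sideX v| => hab.
have ha : a <= j.+1 by lia.
apply: (leq_trans hs).
have : a * b <= j.+2 * (#|V| - j.+3 + 1).
  rewrite -hab; nia.
lia.
Qed.

End G6.

Definition DDT (T : finType) (e : rel T) := \sum_(x : T) \sum_(y : T) (e x y : nat).

Lemma DDT_iso (T T' : finType) (e : rel T) (e' : rel T') : graph_iso e e' -> DDT e = DDT e'.
Proof.
case=> f [bf hf]; rewrite /DDT (reindex f) /=; last by apply: onW_bij.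
apply: eq_bigr => x _; rewrite (reindex f) /=; last by apply: onW_bij.
by apply: eq_bigr => y _; rewrite hf.
Qed.

Lemma DD_T (T : finType) (e : rel T) : DD e setT = DDT e.
Proof.
rewrite /DD /DDT; apply: eq_big => [x|x _]; first by rewrite inE.
by rewrite /deg; apply: eq_bigl => y; rewrite inE.
Qed.

Lemma card_lt (a b : nat) : #|[set x : 'I_(a + b) | x < a]| = a.
Proof.
have -> : [set x : 'I_(a + b) | x < a] = [set lshift b i | i in [set: 'I_a]].
  apply/setP => x; rewrite inE; apply/idP/imsetP => [xa|[i _ ->]]; last by rewrite /= ltn_ord.
  by exists (Ordinal xa) => //; apply: val_inj.
by rewrite card_imset ?cardsT ?card_ord //; apply: lshift_inj.
Qed.

Lemma DDT_Kab a b : DDT (Kab_rel a b) = 2 * (a * b).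
Proof.
set X := [set x : 'I_(a + b) | x < a].
have := cross_sum [set: 'I_(a + b)] X; rewrite setTI setTD.
have cX : #|X| = a by apply: card_lt.
have cXc : #|~: X| = b by have := cardsC X; rewrite card_ord cX; lia.
rewrite cX cXc => <-; rewrite /DDT; apply: eq_big => [x|x _]; first by rewrite inE.
apply: eq_big => [y|y _]; first by rewrite inE.
by rewrite /Kab_rel /cross !inE.
Qed.

Lemma sum_eqp n p : \sum_(x < n) (val x == p : nat) = (p < n).
Proof.
case: (ltnP p n) => pn.
  rewrite (bigD1 (Ordinal pn)) //= eqxx big1 // => x /negbTE h.
  by apply/eqP; rewrite eqb0; apply/negP => /eqP hx; move: h; rewrite (_ : x = Ordinal pn) ?eqxx //; apply: val_inj.
rewrite big1 // => x _; apply/eqP; rewrite eqb0; apply/negP => /eqP hx.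
by have := ltn_ord x; rewrite hx ltnNge pn.
Qed.

Lemma tns_par s x y : tns_adj s x y =
  (x == (if (s < y <= 2 * s) then y - s else 0)) && (y != 0).
Proof. rewrite /tns_adj; case: ifP => h; apply/idP/idP; lia. Qed.

Lemma DDT_Tns n s : 0 < n -> DDT (Tns_rel n s) = 2 * (n - 1).
Proof.
move=> n0; rewrite /DDT /Tns_rel.
have h x y : (tns_adj s x y || tns_adj s y x : nat) = tns_adj s x y + tns_adj s y x.
  have : ~~ (tns_adj s x y && tns_adj s y x).
    by apply/negP => /andP [h1 h2]; move: h1 h2; rewrite /tns_adj; lia.
  by case: (tns_adj s x y); case: (tns_adj s y x).
under eq_bigr do under eq_bigr do rewrite h.
under eq_bigr do rewrite big_split /=.
rewrite big_split /= [X in _ + X]exchange_big /=.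
have hy (y : 'I_n) : \sum_(x < n) (tns_adj s x y : nat) = (val y != 0).
  rewrite (eq_bigr (fun x : 'I_n => ((val x == (if (s < y <= 2 * s) then y - s else 0)) : nat) * (val y != 0))); last first.
    by move=> x _; rewrite tns_par; case: (_ == _); case: (_ != _).
  rewrite -big_distrl /= sum_eqp.
  have : (if (s < y <= 2 * s) then y - s else 0) < n by have yn : val y < n := ltn_ord y; have yn' := ltn_ord y; case: ifP; lia.
  by move=> ->; rewrite mul1n.
rewrite exchange_big /= (eq_bigr _ (fun y _ => hy y)).
have : \sum_(y < n) (val y != 0 : nat) + \sum_(y < n) (val y == 0 : nat) = n.
  rewrite -big_split /= -[X in _ = X]card_ord -sum1_card; apply: eq_bigr => y _.
  by case: (_ == _).
rewrite sum_eqp n0 /=; lia.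
Qed.

Section G8.
Variable T : finType.
Variable e : rel T.
Variable A : {set T}.
Hypothesis esym : symmetric e.
Hypothesis hA : forall x y, e x y -> (x \in A) != (y \in A).

Lemma deg_restrict (V S : {set T}) x : (forall y, y \in S -> e x y = false) ->
  deg e V x = \sum_(y in V :\: S) (e x y : nat).
Proof.
move=> h; rewrite /deg (big_setID S) /= big1 ?add0n // => y /setIP [_ yS].
by rewrite h.
Qed.

Lemma DDT_A : DDT e = 2 * \sum_(x in A) deg e setT x.
Proof.
rewrite -DD_T /DD (big_setID A) setTI setTD /=.
have h1 x : x \in ~: A -> deg e setT x = \sum_(y in A) (e x y : nat).
  move=> xA; rewrite (@deg_restrict setT (~: A) x) ?setTD ?setCK // => y yA.
  apply/negP => /hA; move: xA yA; rewrite !inE => /negbTE -> /negbTE ->; by [].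
have h2 y : y \in A -> deg e setT y = \sum_(x in ~: A) (e y x : nat).
  move=> yA; rewrite (@deg_restrict setT A y) ?setTD // => x xA.
  by apply/negP => /hA; rewrite yA xA.
rewrite [X in _ + X](eq_bigr _ h1) [X in _ + X]exchange_big /=.
rewrite [X in _ + X = _](eq_bigr (fun y => deg e setT y)); first lia.
by move=> y yA; rewrite h2 //; apply: eq_bigr => x _; rewrite esym.
Qed.

Lemma ne_A : num_edges e = \sum_(x in A) deg e setT x.
Proof.
set P := [set p : T * T | (p.1 \in A) && e p.1 p.2].
rewrite /num_edges.
have -> : edge_set e = [set [set p.1; p.2] | p in P].
  apply/setP => B; rewrite inE; apply/idP/imsetP.
    case/existsP => x /existsP [y /andP [/eqP -> exy]].
    case xA: (x \in A).
      by exists (x, y) => //; rewrite inE xA.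
    have yA : y \in A by move: (hA exy); rewrite xA; case: (y \in A).
    by exists (y, x); [rewrite inE yA esym | rewrite /= setUC].
  move=> [[x y]]; rewrite inE /= => /andP [xA exy] ->.
  by apply/existsP; exists x; apply/existsP; exists y; rewrite eqxx.
rewrite card_in_imset.
  rewrite -sum1_card big_mkcond /=.
  rewrite (eq_bigr (fun p : T * T => ((p.1 \in A) && e p.1 p.2 : nat))); last first.
    by move=> p _; rewrite inE; case: (_ && _).
  rewrite -(pair_big xpredT xpredT (fun x y => ((x \in A) && e x y : nat))) /=.
  rewrite [RHS]big_mkcond /=; apply: eq_bigr => x _.
  case xA: (x \in A); last by rewrite big1.
  by rewrite /deg; apply: eq_big => [y|y _]; rewrite ?inE.
move=> [x y] [x' y']; rewrite !inE /= => /andP [xA exy] /andP [xA' exy'] h.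
have yA : y \notin A by move: (hA exy); rewrite xA; case: (y \in A).
have yA' : y' \notin A by move: (hA exy'); rewrite xA'; case: (y' \in A).
have : x \in [set x'; y'] by rewrite -h !inE eqxx.
rewrite !inE => /orP [/eqP xx|/eqP xy]; last by move: yA'; rewrite -xy xA.
have : y \in [set x'; y'] by rewrite -h !inE eqxx orbT.
rewrite !inE => /orP [/eqP yx|/eqP yy]; first by move: yA; rewrite yx xA'.
by rewrite xx yy.
Qed.

Lemma ne_DDT : 2 * num_edges e = DDT e.
Proof. by rewrite DDT_A ne_A. Qed.

End G8.

Lemma size_cover (T : finType) (L : seq T) : uniq L -> (forall x, x \in L) -> size L = #|T|.
Proof.
move=> uL hL; rewrite -(card_uniqP uL); apply: eq_card => x; by rewrite hL.
Qed.

Lemma iso_of_seq (T : finType) (e : rel T) m (R : rel 'I_m) (L : seq T) x0 :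
  uniq L -> (forall x, x \in L) -> size L = m ->
  (forall i j : 'I_m, e (nth x0 L i) (nth x0 L j) = R i j) -> graph_iso e R.
Proof.
move=> uL hL sL hR.
have hi x : index x L < m by rewrite -sL index_mem.
pose f x : 'I_m := Ordinal (hi x).
pose g (i : 'I_m) := nth x0 L i.
have fg : cancel f g by move=> x; rewrite /g /= nth_index.
have gf : cancel g f.
  by move=> i; apply: val_inj => /=; rewrite /g index_uniq // sL.
exists f; split; first by exists g.
have fg' x : nth x0 L (f x) = x := fg x.
by move=> x y; rewrite -hR !fg'.
Qed.

Lemma key a c b : 0 < c -> a + c < b -> a * b < (a + c) * (b - c).
Proof. move=> c0 h. have -> : b = (b - c) + c by lia. set d := b - c. rewrite addnK. nia. Qed.

Section G9.
Variable T : finType.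
Variable e : rel T.
Variable A : {set T}.
Hypothesis esym : symmetric e.
Hypothesis hA : forall x y, e x y -> (x \in A) != (y \in A).

Lemma eq_K k n : 3 <= k -> #|T| = n -> 11 * k - 4 <= n -> ~ has_pack e setT k ->
  DD e setT = 2 * (k - 1) * (n - k + 1) -> graph_iso e (Kab_rel (k - 1) (n - k + 1)).
Proof.
move=> k3 hn hnk np hD.
have cT : #|[set: T]| = n by rewrite cardsT.
case: (deg_cases e setT k) => [hd|[v vV hv]].
  have h : DD e setT < 2 * (k - 1) * (#|[set: T]| - k + 1) by apply: (lowdeg esym hA) => //; lia.
  by rewrite hD cT ltnn in h.
have k0 : 0 < k by lia.
have np' : ~ has_pack e (setT :\ v) k.-1 := fun h => np (hi_ext esym hA vV hv k0 h).
have cV : #|[set: T] :\ v| = n - 1 by rewrite [n](_ : n = #|[set: T]|) // [in RHS](cardsD1 v) vV add1n subn1.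
have E := DD_split esym hA vV.
have hQ : DD e (setT :\ v) <= 2 * (k - 2) * (n - k + 1).
  have := Qk esym hA (j := k - 3) (V := setT :\ v); rewrite cV.
  have -> : (k - 3).+2 = k.-1 by lia.
  move=> /(_ _ np') h; apply: leq_trans (h _) _; lia.
have hd : n - k + 1 <= deg e setT v.
  have : (k - 1) * (n - k + 1) = (k - 2) * (n - k + 1) + (n - k + 1).
    have -> : k - 1 = (k - 2) + 1 by lia.
    by rewrite mulnDl mul1n.
  lia.
set X := sideX A v.
have hs := side_bound (setT) (@sideX_cross _ _ _ hA v).
have hb := deg_side hA setT v.
have := cardsID X setT; rewrite cT.
rewrite -/X in hs hb *.
set a := #|setT :&: X|; set b := #|setT :\: X| => hab.
have ha1 : a <= k - 1 by lia.
have hab2 : (k - 1) * (n - k + 1) <= a * b by lia.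
have ha : a = k - 1.
  apply/eqP; rewrite eqn_leq ha1 /= leqNgt; apply/negP => hlt.
  have := @key a (k - 1 - a) b (_ : 0 < k - 1 - a) (_ : a + (k - 1 - a) < b).
  have -> : a + (k - 1 - a) = k - 1 by lia.
  have -> : b - (k - 1 - a) = n - k + 1 by lia.
  move=> h; have := h _ _; lia.
have hcross x y : e x y -> cross X x y := @sideX_cross _ _ _ hA v x y.
have hD2 : DD e setT = \sum_(x in setT) \sum_(y in setT) (cross X x y : nat).
  rewrite cross_sum -/a -/b; lia.
have eqc x y : e x y = cross X x y.
  have h2 : deg e setT x = \sum_(y in setT) (cross X x y : nat).
    apply: (@sum_le_eq _ setT (deg e setT) (fun x => \sum_(y in setT) (cross X x y : nat))) => //.
    + by move=> z _; apply: leq_sum => w _; case ezw: (e z w) => //; rewrite hcross.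
    + by rewrite -hD2.
  have h4 : (e x y : nat) = cross X x y.
    apply: (@sum_le_eq _ setT (fun y => (e x y : nat)) (fun y => (cross X x y : nat))) => //.
    + by move=> z _; case exz: (e x z) => //; rewrite hcross.
    + by rewrite -h2.
  by case: (e x y) h4; case: (cross X x y).
have cX : #|X| = k - 1 by rewrite -ha /a setTI.
have cXc : #|~: X| = n - k + 1 by have := cardsC X; rewrite hn cX; lia.
set L := enum X ++ enum (~: X).
have memL i : i < size L -> (nth v L i \in X) = (i < k - 1).
  rewrite /L size_cat -!cardE nth_cat -cardE cX => hi; case: ifP => h.
    by have := mem_nth v (_ : i < size (enum X)); rewrite -cardE cX mem_enum => /(_ h).
  have : i - (k - 1) < size (enum (~: X)) by rewrite -cardE; lia.
  by move/(mem_nth v); rewrite mem_enum inE => /negbTE.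
have sL : size L = k - 1 + (n - k + 1) by rewrite /L size_cat -!cardE cX cXc.
apply: (iso_of_seq (L := L) (x0 := v)) => //.
- by rewrite cat_uniq !enum_uniq /= andbT; apply/hasPn => x; rewrite !mem_enum inE => /negbTE ->.
- by move=> x; rewrite mem_cat !mem_enum inE orbN.
- move=> i j; rewrite eqc /cross /Kab_rel !memL //; by rewrite sL.
Qed.

End G9.

Section G10.
Variable T : finType.
Variable e : rel T.
Variable A : {set T}.
Hypothesis esym : symmetric e.
Hypothesis hA : forall x y, e x y -> (x \in A) != (y \in A).

Lemma eq_T n : #|T| = n -> 18 <= n -> ~ has_pack e setT 2 ->
  DD e setT = 2 * (n - 1) -> exists s, s <= (n - 1) %/ 2 /\ graph_iso e (Tns_rel n s).
Proof.
move=> hn hn18 np hD.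
have cT : #|[set: T]| = n by rewrite cardsT.
case: (deg_cases e setT 2) => [hd|[v vV hv]].
  have h : DD e setT < 2 * (2 - 1) * (#|[set: T]| - 2 + 1) by apply: (lowdeg esym hA) => //; lia.
  by rewrite hD cT in h; lia.
have np' : ~ has_pack e (setT :\ v) 1 := fun h => np (hi_ext esym hA vV hv (isT : 0 < 2) h).
set V' := setT :\ v.
set N := [set y in setT | e v y].
set U := V' :\: N.
have [hb hc hd1 hcard] := star_bound esym hA vV np' (erefl N) (erefl U).
rewrite cT in hcard.
have hc1 u : u \in U -> \sum_(x in N) (e u x : nat) = 1.
  move=> uU; apply: (@sum_le_eq _ U (fun u => \sum_(x in N) (e u x : nat)) (fun _ => 1)) => //.
  by rewrite sum1_card; lia.
have inN y : (y \in N) = e v y by rewrite inS in_setT.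
have inV' y : (y \in V') = (y != v) by rewrite !inE andbT.
have inU u : (u \in U) = (u != v) && ~~ e v u by rewrite !inE; case: (e v u); case: (u == v).
have vN : v \notin N by rewrite inN (eirr hA).
pose p u := odflt v [pick x in N | e u x].
have pP u : u \in U -> p u \in N /\ e u (p u).
  move=> uU; rewrite /p; case: pickP => [x /andP [xN eux] //|h0].
  have := hc1 u uU; rewrite big1 // => x xN; by have := h0 x; rewrite /= xN /= => ->.
have Nv y : y \in N -> y != v by apply: contraTneq => ->.
have F2 u y : u \in U -> e u y -> y = p u.
  move=> uU euy; have [pN epu] := pP u uU.
  have yv : y != v.
    by apply: contraTneq euy => ->; move: uU; rewrite inU esym => /andP [_ /negbTE ->].
  apply/eqP; apply: contraT => ne.
  have uv : u \in V' by move: uU; rewrite inU inV' => /andP [].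
  have h1 := hd1 u uv; rewrite degE in h1.
  suff : 1 < #|[set z in V' | e u z]| by rewrite ltnNge h1.
  by apply/card_gt1P; exists y, (p u); rewrite !inS !inV' yv euy epu Nv.
have F4 u u' : u \in U -> u' \in U -> p u = p u' -> u = u'.
  move=> uU uU' h; apply/eqP; apply: contraT => ne.
  have [pN epu] := pP u uU; have [_ epu'] := pP u' uU'; rewrite -h in epu'.
  have puV : p u \in V' by rewrite inV' Nv.
  have h1 := hd1 (p u) puV.
  rewrite degE in h1.
  suff : 1 < #|[set z in V' | e (p u) z]| by rewrite ltnNge h1.
  apply/card_gt1P; exists u, u'; rewrite !inS !inV' ne (esym _ u) (esym _ u') epu epu'.
  by move: uU uU'; rewrite !inU => /andP [-> _] /andP [-> _].
have F3 x y : x \in N -> y \in N -> e x y = false.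
  rewrite !inN => ex ey; apply/negP => exy; exact: (tri_false hA ex exy ey).
set s := #|U|.
set W := N :\: [set p u | u in U].
set L := v :: (map p (enum U) ++ (enum U ++ enum W)).
have WN x : x \in W -> x \in N by case/setDP.
have NU x : x \in N -> x \notin U by rewrite inU inN => ->; rewrite andbF.
have mapN x : x \in map p (enum U) -> x \in N.
  by case/mapP => u; rewrite mem_enum => uU ->; case: (pP u uU).
have uM : uniq (map p (enum U)).
  by rewrite map_inj_in_uniq ?enum_uniq // => x y; rewrite !mem_enum; apply: F4.
have uR : uniq (enum U ++ enum W).
  rewrite cat_uniq !enum_uniq /= andbT; apply/hasPn => x; rewrite !mem_enum => xW.
  by apply: NU; apply: WN.
have dj : ~~ has (mem (map p (enum U))) (enum U ++ enum W).
  apply/hasPn => x; rewrite mem_cat !mem_enum => /orP [xU|xW].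
    by apply/negP => /mapN /NU; rewrite xU.
  apply/negP => /mapP [u]; rewrite mem_enum => uU xe.
  by move: xW; rewrite /W in_setD xe imset_f.
have uL : uniq L.
  rewrite /L cons_uniq cat_uniq uM dj uR !andbT !mem_cat !mem_enum.
  rewrite inU eqxx /= negb_or; apply/andP; split; apply/negP; first by move/mapN; rewrite (negbTE vN).
  by move/WN; rewrite (negbTE vN).
have cL x : x \in L.
  rewrite /L inE !mem_cat !mem_enum; case xv: (x == v) => //=.
  case exv: (e v x); last by rewrite inU xv exv /= orbT.
  have xN : x \in N by rewrite inN.
  case xP: (x \in [set p u | u in U]).
    by case/imsetP: xP => u uU ->; rewrite map_f ?mem_enum.
  have xW : x \in W by rewrite /W in_setD xP xN.
  by rewrite xW !orbT.
have sL : size L = n by rewrite size_cover.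
have sL2 : size L = 1 + s + s + #|W| by rewrite /L /= size_cat size_map size_cat -!cardE; lia.
exists s; split; first by rewrite -sL sL2; lia.
have sU : size (enum U) = s by rewrite -cardE.
have sW : size (enum W) = #|W| by rewrite -cardE.
have mU j : j < s -> nth v (enum U) j \in U by move=> js; rewrite -mem_enum mem_nth // sU.
have mW j : j < #|W| -> nth v (enum W) j \in W by move=> js; rewrite -mem_enum mem_nth // sW.
have gN1 i : 0 < i <= s -> nth v L i = p (nth v (enum U) i.-1).
  case: i => [|i] //= hi; rewrite nth_cat size_map sU (_ : i < s) ?(nth_map v) ?sU //; lia.
have gU i : s < i <= 2 * s -> nth v L i = nth v (enum U) (i.-1 - s).
  case: i => [|i] hi /=; first by lia.
  rewrite nth_cat size_map sU (_ : i < s = false); last by lia.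
  by rewrite nth_cat sU (_ : i - s < s) //; lia.
have gN2 i : 2 * s < i -> nth v L i = nth v (enum W) (i.-1 - s - s).
  case: i => [|i] hi /=; first by lia.
  rewrite nth_cat size_map sU (_ : i < s = false); last by lia.
  rewrite nth_cat sU (_ : i - s < s = false); last by lia.
  by [].
have cN i : i < n -> (0 < i <= s) || (2 * s < i) -> nth v L i \in N.
  move=> hin /orP [h|h].
    have h1 : i.-1 < s by lia.
    by rewrite gN1 //; case: (pP _ (mU _ h1)).
  by rewrite gN2 //; apply: WN; apply: mW; lia.
have cU i : s < i <= 2 * s -> nth v L i \in U by move=> h; rewrite gU //; apply: mU; lia.
have eV j : j < n -> e v (nth v L j) = (0 < j <= s) || (2 * s < j).
  move=> jn; case j0: (j == 0); first by move/eqP: j0 => ->; rewrite /L /= (eirr hA) ltn0.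
  case h: ((0 < j <= s) || (2 * s < j)); first by rewrite -inN (cN j jn h).
  have hj : s < j <= 2 * s by lia.
  by have := cU j hj; rewrite inU => /andP [_ /negbTE].
have eU i j : s < i <= 2 * s -> j < n -> e (nth v L i) (nth v L j) = (j == i - s).
  move=> hi jn.
  have pg : p (nth v L i) = nth v L (i - s).
    have hi1 : 0 < i - s <= s by lia.
    rewrite (gU i hi) (gN1 _ hi1); congr (p (nth v (enum U) _)); lia.
  have -> : e (nth v L i) (nth v L j) = (nth v L j == p (nth v L i)).
    apply/idP/eqP => [h|->]; first by apply: F2 => //; apply: cU.
    by case: (pP _ (cU _ hi)).
  by rewrite pg nth_uniq // sL; lia.
have g0 : nth v L 0 = v by [].
apply: (iso_of_seq (L := L) (x0 := v)) => //; case=> i hi; case=> j hj; rewrite /Tns_rel /=.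
case i0: (i == 0).
  move/eqP: i0 => ->; rewrite g0 eV // /tns_adj; apply/idP/idP; lia.
case j0: (j == 0).
  move/eqP: j0 => ->; rewrite g0 esym eV // /tns_adj; apply/idP/idP; lia.
case hiU: (s < i <= 2 * s).
  rewrite eU // /tns_adj; apply/idP/idP; lia.
case hjU: (s < j <= 2 * s).
  rewrite esym eU // /tns_adj; apply/idP/idP; lia.
rewrite F3 ?cN //; last by lia.
  by rewrite /tns_adj; apply/idP/idP; lia.
by lia.
Qed.

End G10.

Unset Implicit Arguments.

Theorem mainTheorem2 (k n : nat) (T : finType) (e : rel T) :
  2 <= k ->
  simple_graph e ->
  bipartite e ->
  #|T| = n ->
  11 * k - 4 <= n ->
  ~ contains_kP3 e k ->
  num_edges e <= (k - 1) * (n - k + 1) /\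
  (k = 2 ->
     (num_edges e = (k - 1) * (n - k + 1) <->
      exists s, s <= (n - 1) %/ 2 /\ graph_iso e (Tns_rel n s))) /\
  (3 <= k ->
     (num_edges e = (k - 1) * (n - k + 1) <->
      graph_iso e (Kab_rel (k - 1) (n - k + 1)))).
Proof.
move=> k2 [esym _] [A hA] hn hnk nc.
have np : ~ has_pack e setT k := fun h => nc (pack_contains h).
have ne := ne_DDT esym hA.
have DT := DD_T e.
have cT : #|[set: T]| = n by rewrite cardsT.
have hQ : DD e setT <= 2 * (k - 1) * (n - k + 1).
  have := Qk esym hA (j := k - 2) (V := setT); rewrite cT (_ : (k - 2).+2 = k); last by lia.
  by move=> /(_ hnk np).
split; first by lia.
split.
  move=> k2'; subst k; split => [heq|[s [hs iso]]].
    apply: (eq_T esym hA hn) => //; lia.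
  have := DDT_iso iso; rewrite DDT_Tns; last by lia.
  lia.
move=> k3; split => [heq|iso].
  apply: (eq_K esym hA k3 hn hnk np); lia.
have := DDT_iso iso; rewrite DDT_Kab; lia.
Qed.
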